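(* Let $\mathbf{L}$ be a Euclidean modal logic. For every first-order sentence $A$, $A$ is modally definable in $\mathtt{Fr}(\mathbf{L})$ if and only if both of the following hold: (i) for every Euclidean frame $(W,R)$ in which $\mathbf{L}$ is valid, $(W,R)\models A$ if and only if $(W_s,R_s)\models A$ for all $s\in W$; (ii) for all flowers $\mathcal{F}_m^n,\mathcal{F}_{m'}^{n'}$, if $\mathbf{L}$ is valid in $\mathcal{F}_m^n$, $\mathcal{F}_m^n\models A$ and $\mathcal{F}_{m'}^{n'}$ is a bounded morphic image of $\mathcal{F}_m^n$, then $\mathcal{F}_{m'}^{n'}\models A$.
   Context: A frame is a pair $(W,R)$ with $W$ a non-empty set and $R\subseteq W\times W$; it is Euclidean if for all $s,t,u\in W$, $sRt$ and $sRu$ imply $tRu$ and $uRt$. Modal formulas (propositional variables, $\bot,\neg,\vee,\Box$) have standard Kripke semantics; validity in a frame means truth at all points under all valuations. A (normal) modal logic is a set of modal formulas containing all tautologies and the K axioms, closed under uniform substitution, modus ponens and necessitation; a Euclidean modal logic is one not containing $\bot$ and containing $\Diamond\varphi\to\Box\Diamond\varphi$ for all $\varphi$. $\mathtt{Fr}(\mathbf{L})$ is the class of frames validating $\mathbf{L}$. First-order sentences use one binary relation symbol $\mathbf{R}$ and equality. A sentence $A$ is modally definable in a class $\mathcal{C}$ if there is a modal formula $\varphi$ with $\mathcal{F}\models\varphi\iff\mathcal{F}\models A$ for all $\mathcal{F}\in\mathcal{C}$. $(W,R)$ is a generated subframe of $(W',R')$ if $W\subseteq W'$, $R\subseteq R'$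 and whenever $s\in W$ and $sR't'$ then $t'\in W$ and $sRt'$; $(W_s,R_s)$ denotes the least generated subframe of $(W,R)$ containing $s$. A map $f:W'\to W$ is a bounded morphism from $(W',R')$ to $(W,R)$ if $s'R't'$ implies $f(s')Rf(t')$, and $f(s')Rt$ implies there is $t'$ with $s'R't'$ and $f(t')=t$; $(W,R)$ is a bounded morphic image of $(W',R')$ if there is a surjective bounded morphism. For $m\ge1$, $n\ge0$ integers, the flower $\mathcal{F}_m^n$ has universe $\{0,\dots,m+n\}$ and relation $(\{0\}\times\{1,\dots,m\})\cup\{1,\dots,m+n\}^2$; for $m\ge1$, $\mathcal{F}_m^{-1}$ has universe $\{1,\dots,m\}$ and relation $\{1,\dots,m\}^2$. *)

(* Defs.v *)
From Stdlib Require Import ZArith Relations Lia Bool.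
Set Implicit Arguments.

Record frame := Frame {
  fW :> Type;
  fR : fW -> fW -> Prop;
  fne : inhabited fW
}.

Definition euclidean (F : frame) : Prop :=
  forall s t u : F, fR F s t -> fR F s u -> fR F t u /\ fR F u t.

Inductive mform :=
| MVar : nat -> mform
| MBot : mform
| MNeg : mform -> mform
| MOr  : mform -> mform -> mform
| MBox : mform -> mform.

Definition MImp (a b : mform) := MOr (MNeg a) b.
Definition MDia (a : mform) := MNeg (MBox (MNeg a)).

Fixpoint msat (F : frame) (V : nat -> F -> Prop) (w : F) (phi : mform) : Prop :=
  match phi with
  | MVar p => V p w
  | MBot => False
  | MNeg a => ~ msat F V w a
  | MOr a b => msat F V w a \/ msat F V w b
  | MBox a => forall v, fR F w v -> msat F V v a
  end.

Definition mvalid (F : frame) (phi : mform) : Prop :=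
  forall (V : nat -> F -> Prop) (w : F), msat F V w phi.

Fixpoint peval (v : mform -> bool) (phi : mform) : bool :=
  match phi with
  | MVar _ => v phi
  | MBot => false
  | MNeg a => negb (peval v a)
  | MOr a b => orb (peval v a) (peval v b)
  | MBox _ => v phi
  end.

Definition tautology (phi : mform) : Prop := forall v, peval v phi = true.

Fixpoint msubst (sigma : nat -> mform) (phi : mform) : mform :=
  match phi with
  | MVar p => sigma p
  | MBot => MBot
  | MNeg a => MNeg (msubst sigma a)
  | MOr a b => MOr (msubst sigma a) (msubst sigma b)
  | MBox a => MBox (msubst sigma a)
  end.

Definition modal_logic (L : mform -> Prop) : Prop :=
  (forall phi, tautology phi -> L phi) /\
  (forall phi psi, L (MImp (MBox (MImp phi psi)) (MImp (MBox phi) (MBox psi)))) /\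
  (forall sigma phi, L phi -> L (msubst sigma phi)) /\
  (forall phi psi, L phi -> L (MImp phi psi) -> L psi) /\
  (forall phi, L phi -> L (MBox phi)).

Definition euclidean_logic (L : mform -> Prop) : Prop :=
  modal_logic L /\ ~ L MBot /\
  (forall phi, L (MImp (MDia phi) (MBox (MDia phi)))).

Definition validates (F : frame) (L : mform -> Prop) : Prop :=
  forall phi, L phi -> mvalid F phi.

Inductive foform :=
| FRel : nat -> nat -> foform
| FEq  : nat -> nat -> foform
| FBot : foform
| FNot : foform -> foform
| FAnd : foform -> foform -> foform
| FOr  : foform -> foform -> foform
| FImp : foform -> foform -> foform
| FAll : nat -> foform -> foform
| FEx  : nat -> foform -> foform.

Fixpoint free_in (x : nat) (A : foform) : Prop :=
  match A with
  | FRel i j | FEq i j => x = i \/ x = j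
  | FBot => False
  | FNot B => free_in x B
  | FAnd B C | FOr B C | FImp B C => free_in x B \/ free_in x C
  | FAll y B | FEx y B => x <> y /\ free_in x B
  end.

Definition sentence (A : foform) : Prop := forall x, ~ free_in x A.

Definition upd {W : Type} (g : nat -> W) (x : nat) (d : W) : nat -> W :=
  fun y => if Nat.eqb y x then d else g y.

Fixpoint fsat (F : frame) (g : nat -> F) (A : foform) : Prop :=
  match A with
  | FRel i j => fR F (g i) (g j)
  | FEq i j => g i = g j
  | FBot => False
  | FNot B => ~ fsat F g B
  | FAnd B C => fsat F g B /\ fsat F g C
  | FOr B C => fsat F g B \/ fsat F g C
  | FImp B C => fsat F g B -> fsat F g C
  | FAll x B => forall d : F, fsat F (upd g x d) B
  | FEx x B => exists d : F, fsat F (upd g x d) B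
  end.

Definition fmodels (F : frame) (A : foform) : Prop := forall g : nat -> F, fsat F g A.

Definition modally_definable (C : frame -> Prop) (A : foform) : Prop :=
  exists phi : mform, forall F : frame, C F -> (mvalid F phi <-> fmodels F A).

Definition Fr (L : mform -> Prop) : frame -> Prop := fun F => validates F L.

Definition gen_carrier (F : frame) (s : F) : Type :=
  { t : F | clos_refl_trans F (fR F) s t }.

Definition gen_subframe (F : frame) (s : F) : frame :=
  @Frame (@gen_carrier F s)
    (fun x y => fR F (proj1_sig x) (proj1_sig y))
    (inhabits (exist _ s (rt_refl _ _ s))).

Definition bounded_morphism (F' F : frame) (f : F' -> F) : Prop :=
  (forall s' t', fR F' s' t' -> fR F (f s') (f t')) /\
  (forall s' t, fR F (f s') t -> exists t', fR F' s' t' /\ f t' = t).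

Definition bm_image (F F' : frame) : Prop :=
  exists f : F' -> F, bounded_morphism F' F f /\ (forall t, exists s', f s' = t).

(* For integers m >= 1, n >= -1: F_m^n (n >= 0: universe {0..m+n};
   n = -1: universe {1..m}). Points are integers. *)
Definition flower_pt (m n k : Z) : bool :=
  if (0 <=? n)%Z then andb (0 <=? k)%Z (k <=? m + n)%Z
  else andb (1 <=? k)%Z (k <=? m)%Z.

Definition flower_carrier (m n : Z) : Type := { k : Z | flower_pt m n k = true }.

Definition flower_rel (m n : Z) (x y : flower_carrier m n) : Prop :=
  let k := proj1_sig x in let j := proj1_sig y in
  ((k = 0 /\ 1 <= j <= m) \/ (1 <= k /\ 1 <= j))%Z.

Lemma flower_pt_one (m n : Z) : (1 <= m)%Z -> (-1 <= n)%Z -> flower_pt m n 1 = true.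
Proof.
  intros Hm Hn. unfold flower_pt.
  destruct (0 <=? n)%Z eqn:E.
  - apply Z.leb_le in E. apply andb_true_intro; split; apply Z.leb_le; lia.
  - apply andb_true_intro; split; apply Z.leb_le; lia.
Qed.

Definition flower (m n : Z) (Hm : (1 <= m)%Z) (Hn : (-1 <= n)%Z) : frame :=
  @Frame (flower_carrier m n) (@flower_rel m n)
    (inhabits (exist _ 1%Z (flower_pt_one Hm Hn))).

(* Main.v *)
Require Import Defs.
From Stdlib Require Import ZArith Relations Lia Bool List Arith Classical ClassicalEpsilon ProofIrrelevance.
Import ListNotations.

Lemma sig_ext {A : Type} {P : A -> Prop} (x y : sig P) :
  proj1_sig x = proj1_sig y -> x = y.
Proof. destruct x, y; simpl; intros; subst; f_equal; apply proof_irrelevance. Qed.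

Definition reach (F : frame) (s t : F) := clos_refl_trans F (fR F) s t.

Lemma gen_msat (F : frame) (s : F) (VG : nat -> gen_subframe F s -> Prop) (VF : nat -> F -> Prop) :
  (forall p x, VG p x <-> VF p (proj1_sig x)) ->
  forall phi x, msat (gen_subframe F s) VG x phi <-> msat F VF (proj1_sig x) phi.
Proof.
  intros HV phi; induction phi; intros x; simpl.
  - apply HV.
  - tauto.
  - rewrite IHphi; tauto.
  - rewrite IHphi1, IHphi2; tauto.
  - split.
    + intros H w Hw.
      set (v := exist (fun t => clos_refl_trans F (fR F) s t) w
                 (rt_trans _ _ _ _ _ (proj2_sig x) (rt_step _ _ _ _ Hw))).
      apply (IHphi v). apply H. exact Hw.
    + intros H v Hv. apply IHphi. apply H. exact Hv.
Qed.

Lemma gen_mvalid (F : frame) (s : F) phi :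
  mvalid (gen_subframe F s) phi <-> forall (VF : nat -> F -> Prop) (x : gen_subframe F s), msat F VF (proj1_sig x) phi.
Proof.
  split.
  - intros H VF x. apply (gen_msat F s (fun p y => VF p (proj1_sig y)) VF). { intros; tauto. }
    apply H.
  - intros H VG x.
    apply (gen_msat F s VG (fun p w => forall h, VG p (exist _ w h))).
    + intros p [y hy]; simpl; split.
      * intros Hy h. rewrite (proof_irrelevance _ h hy). exact Hy.
      * intros Hh. apply Hh.
    + apply H.
Qed.

Lemma gen_validates (F : frame) (s : F) L : validates F L -> validates (gen_subframe F s) L.
Proof. intros H phi Hphi. apply gen_mvalid. intros; apply H; auto. Qed.

Lemma mvalid_gen (F : frame) phi : mvalid F phi <-> forall s : F, mvalid (gen_subframe F s) phi.
Proof.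
  split.
  - intros H s. apply gen_mvalid. intros; apply H.
  - intros H V w. specialize (H w). rewrite gen_mvalid in H.
    exact (H V (exist _ w (rt_refl _ _ w))).
Qed.

Lemma bm_msat (F' F : frame) (f : F' -> F) (Hbm : bounded_morphism F' F f) (V : nat -> F -> Prop) :
  forall phi s', msat F' (fun p x => V p (f x)) s' phi <-> msat F V (f s') phi.
Proof.
  destruct Hbm as [Hf Hb].
  intros phi; induction phi; intros s'; simpl.
  - tauto.
  - tauto.
  - rewrite IHphi; tauto.
  - rewrite IHphi1, IHphi2; tauto.
  - split.
    + intros H t Ht. destruct (Hb s' t Ht) as [t' [Ht' <-]]. apply IHphi. apply H; auto.
    + intros H t' Ht'. apply IHphi. apply H. apply Hf; auto.
Qed.

Lemma bm_mvalid (F F' : frame) phi : bm_image F F' -> mvalid F' phi -> mvalid F phi.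
Proof.
  intros [f [Hbm Hs]] H V w. destruct (Hs w) as [s' <-].
  apply (bm_msat F' F f Hbm V). apply H.
Qed.

Lemma bm_validates (F F' : frame) L : bm_image F F' -> validates F' L -> validates F L.
Proof. intros Hb H phi Hp. apply (bm_mvalid F F'); auto. Qed.

Lemma euclid_of_L L F : euclidean_logic L -> validates F L -> euclidean F.
Proof.
  intros [_ [_ H5]] HF.
  assert (Key : forall s t u : F, fR F s t -> fR F s u -> fR F t u).
  { intros s t u Hst Hsu.
    pose proof (HF _ (H5 (MVar 0)) (fun _ x => x = u) s) as Hs.
    simpl in Hs. destruct Hs as [Hs|Hs].
    - exfalso. apply Hs. intros Hn. apply (Hn u Hsu). reflexivity.
    - specialize (Hs t Hst). apply NNPP. intros Hn. apply Hs. intros v Hv Hvu. subst. auto. }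
  intros s t u Hst Hsu. split; eapply Key; eauto.
Qed.

Inductive kind := KRoot | KPetal | KStem.

Definition relk (a b : kind) : Prop :=
  match a, b with
  | KRoot, KPetal => True
  | KRoot, _ => False
  | _, KRoot => False
  | _, _ => True
  end.

Definition kinded (F : frame) (k : F -> kind) : Prop :=
  forall x y, fR F x y <-> relk (k x) (k y).

Definition atleast {X : Type} (P : X -> Prop) (j : nat) : Prop :=
  exists l : list X, length l = j /\ NoDup l /\ forall x, In x l -> P x.

Lemma atleast_ext {X} (P Q : X -> Prop) j : (forall x, P x <-> Q x) -> (atleast P j <-> atleast Q j).
Proof.
  intros H; split; intros [l [H1 [H2 H3]]]; exists l; repeat split; auto; intros x Hx; apply H; auto.
Qed.

Lemma atleast_down {X} (P : X -> Prop) j k : k <= j -> atleast P j -> atleast P k.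
Proof.
  intros Hk [l [H1 [H2 H3]]]. exists (firstn k l). repeat split.
  - rewrite length_firstn. lia.
  - rewrite <- (firstn_skipn k l) in H2. eapply NoDup_app_remove_r; eauto.
  - intros x Hx. apply H3. rewrite <- (firstn_skipn k l). apply in_or_app; auto.
Qed.

Lemma atleast_minus {X} (Q : X -> Prop) (d : X) j :
  Q d -> (atleast (fun x => Q x /\ x <> d) j <-> atleast Q (S j)).
Proof.
  intros Hd; split.
  - intros [l [H1 [H2 H3]]]. exists (d :: l). repeat split.
    + simpl; lia.
    + constructor; auto. intros Hin. apply (H3 d Hin). auto.
    + intros x [<-|Hx]; auto. apply H3; auto.
  - intros [l [H1 [H2 H3]]].
    destruct (classic (In d l)) as [Hin|Hnin].
    + destruct (in_split _ _ Hin) as [l1 [l2 ->]].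
      exists (l1 ++ l2). repeat split.
      * rewrite length_app in *; simpl in H1; lia.
      * eapply NoDup_remove_1; eauto.
      * apply H3. apply in_or_app. apply in_app_or in H. simpl. tauto.
      * intros ->. apply (NoDup_remove_2 _ _ _ H2). auto.
    + destruct l as [|a l']; simpl in H1; [lia|].
      exists l'. repeat split.
      * lia.
      * inversion H2; auto.
      * apply H3; simpl; auto.
      * intros ->. apply Hnin; simpl; auto.
Qed.

Section EF.
Variables (F1 F2 : frame) (k1 : F1 -> kind) (k2 : F2 -> kind).
Hypothesis (K1 : kinded F1 k1) (K2 : kinded F2 k2).

Definition Inv (q : nat) (P : list (F1 * F2)) : Prop :=
  (forall a b, In (a, b) P -> k1 a = k2 b) /\
  (forall a b a' b', In (a, b) P -> In (a', b') P -> (a = a' <-> b = b')) /\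
  (forall K j, j <= q ->
     (atleast (fun x => k1 x = K /\ ~ In x (map fst P)) j <->
      atleast (fun y => k2 y = K /\ ~ In y (map snd P)) j)).

Lemma forth q P d1 : Inv (S q) P -> exists d2, Inv q ((d1, d2) :: P).
Proof.
  intros [HK [HE HC]].
  destruct (classic (In d1 (map fst P))) as [Hin|Hnin].
  - apply in_map_iff in Hin. destruct Hin as [[a b] [Ha Hab]]. simpl in Ha; subst a.
    exists b. split; [|split].
    + intros a b' [E|E]; [inversion E; subst|]; eauto.
    + intros a b0 a' b' [E|E] [E'|E']; try (inversion E; subst); try (inversion E'; subst); eauto.
      all: try tauto.
    + intros K j Hj. simpl.
      assert (Hb : In b (map snd P)) by (apply in_map_iff; exists (d1, b); auto).
      rewrite (atleast_ext _ (fun x => k1 x = K /\ ~ In x (map fst P))).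
      2:{ intros x; split; [tauto|]. intros [H1 H2]; split; auto. intros [->|H]; auto.
          apply H2; apply in_map_iff; exists (x, b); auto. }
      rewrite (atleast_ext (fun y => k2 y = K /\ ~ (b = y \/ In y (map snd P))) (fun y => k2 y = K /\ ~ In y (map snd P))).
      2:{ intros x; split; [tauto|]. intros [H1 H2]; split; auto. intros [->|H]; auto. }
      apply HC; lia.
  - assert (H1 : atleast (fun x => k1 x = k1 d1 /\ ~ In x (map fst P)) 1).
    { exists [d1]. split; [reflexivity|split].
      - repeat constructor; simpl; tauto.
      - intros x [<-|[]]; auto. }
    apply HC in H1; [|lia].
    destruct H1 as [[|d2 [|]] [L1 [_ L3]]]; simpl in L1; try lia.
    destruct (L3 d2 (or_introl eq_refl)) as [Hk2 Hn2].
    exists d2. split; [|split].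
    + intros a b [E|E]; [inversion E; subst|]; eauto.
    + intros a b a' b' H H'. destruct H as [E|H]; destruct H' as [E'|H'].
      * inversion E; inversion E'; subst; tauto.
      * inversion E; subst. split; intros Ee; subst; exfalso; first [apply Hnin; apply in_map_iff; eexists; split; [|eassumption]; reflexivity | apply Hn2; apply in_map_iff; eexists; split; [|eassumption]; reflexivity].

      * inversion E'; subst. split; intros Ee; subst; exfalso; first [apply Hnin; apply in_map_iff; eexists; split; [|eassumption]; reflexivity | apply Hn2; apply in_map_iff; eexists; split; [|eassumption]; reflexivity].

      * eauto.
    + intros K j Hj. simpl.
      destruct (classic (K = k1 d1)) as [EK|NK].
      * subst K.
        rewrite (atleast_ext _ (fun x => (k1 x = k1 d1 /\ ~ In x (map fst P)) /\ x <> d1)).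
        2:{ intros x; split.
            - intros [A B]; split; [split; [exact A| intro; apply B; right; assumption] | intro; subst; apply B; left; reflexivity].
            - intros [[A B] C]; split; auto. intros [->|D]; auto. }
        rewrite (atleast_ext (fun y => k2 y = k1 d1 /\ ~ (d2 = y \/ In y (map snd P))) (fun y => (k2 y = k1 d1 /\ ~ In y (map snd P)) /\ y <> d2)).
        2:{ intros x; split.
            - intros [A B]; split; [split; [exact A| intro; apply B; right; assumption] | intro; subst; apply B; left; reflexivity].
            - intros [[A B] C]; split; auto. intros [->|D]; auto. }
        rewrite atleast_minus by auto. rewrite atleast_minus by auto.
        apply HC; lia.
      * rewrite (atleast_ext _ (fun x => k1 x = K /\ ~ In x (map fst P))).
        2:{ intros x; split; [tauto|]. intros [A B]; split; auto. intros [->|D]; auto. }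
        rewrite (atleast_ext (fun y => k2 y = K /\ ~ (d2 = y \/ In y (map snd P))) (fun y => k2 y = K /\ ~ In y (map snd P))).
        2:{ intros x; split; [tauto|]. intros [A B]; split; auto. intros [->|D]; auto. congruence. }
        apply HC; lia.
Qed.
End EF.

Definition swapP {A B : Type} (P : list (A * B)) : list (B * A) := map (fun ab => (snd ab, fst ab)) P.

Lemma Inv_swap F1 F2 k1 k2 q P : Inv F1 F2 k1 k2 q P -> Inv F2 F1 k2 k1 q (swapP P).
Proof.
  unfold swapP. intros [HK [HE HC]]. split; [|split].
  - intros a b H. apply in_map_iff in H. destruct H as [[x y] [E H]]. simpl in E. inversion E; subst.
    symmetry; eauto.
  - intros a b a' b' H H'. apply in_map_iff in H. destruct H as [[x y] [E H]].
    apply in_map_iff in H'. destruct H' as [[x' y'] [E' H']]. simpl in *.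
    inversion E; inversion E'; subst. symmetry. eauto.
  - intros K j Hj. rewrite !map_map. simpl. rewrite <- (map_ext snd), <- (map_ext fst) by reflexivity.
    symmetry. apply HC; auto.
Qed.

Lemma swapP_inv {A B} (P : list (A * B)) : swapP (swapP P) = P.
Proof. unfold swapP. rewrite map_map. simpl. induction P as [|[a b] P IH]; simpl; f_equal; auto. Qed.

Lemma back F1 F2 k1 k2 q P d2 : Inv F1 F2 k1 k2 (S q) P -> exists d1, Inv F1 F2 k1 k2 q ((d1, d2) :: P).
Proof.
  intros H. apply Inv_swap in H. destruct (forth _ _ _ _ _ _ d2 H) as [d1 H1].
  exists d1. apply Inv_swap in H1. change (swapP ((d2, d1) :: swapP P)) with ((d1, d2) :: swapP (swapP P)) in H1.
  rewrite swapP_inv in H1. exact H1.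
Qed.

Fixpoint qr (A : foform) : nat :=
  match A with
  | FRel _ _ | FEq _ _ | FBot => 0
  | FNot B => qr B
  | FAnd B C | FOr B C | FImp B C => Nat.max (qr B) (qr C)
  | FAll _ B | FEx _ B => S (qr B)
  end.

Lemma upd_eq {W} (g : nat -> W) x d : upd g x d x = d.
Proof. unfold upd. rewrite Nat.eqb_refl. auto. Qed.
Lemma upd_neq {W} (g : nat -> W) x d i : i <> x -> upd g x d i = g i.
Proof. unfold upd. intros H. apply Nat.eqb_neq in H. rewrite H. auto. Qed.

Lemma EF_main F1 F2 k1 k2 (K1 : kinded F1 k1) (K2 : kinded F2 k2) :
  forall B q P g1 g2, qr B <= q -> Inv F1 F2 k1 k2 q P ->
    (forall i, free_in i B -> In (g1 i, g2 i) P) ->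
    (fsat F1 g1 B <-> fsat F2 g2 B).
Proof.
  intros B; induction B; intros q P g1 g2 Hq HI Hf; simpl in *.
  - rewrite (K1 (g1 n) (g1 n0)), (K2 (g2 n) (g2 n0)). destruct HI as [HK _].
    rewrite (HK _ _ (Hf n (or_introl eq_refl))), (HK _ _ (Hf n0 (or_intror eq_refl))). tauto.
  - destruct HI as [_ [HE _]]. apply HE; auto.
  - tauto.
  - rewrite (IHB q P g1 g2); auto. tauto.
  - rewrite (IHB1 q P g1 g2), (IHB2 q P g1 g2); auto; try tauto; lia.
  - rewrite (IHB1 q P g1 g2), (IHB2 q P g1 g2); auto; try tauto; lia.
  - rewrite (IHB1 q P g1 g2), (IHB2 q P g1 g2); auto; try tauto; lia.
  - destruct q as [|q]; [lia|].
    assert (Hf' : forall d1 d2 i, free_in i B -> In (upd g1 n d1 i, upd g2 n d2 i) ((d1, d2) :: P)).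
    { intros d1 d2 i Hi. destruct (Nat.eq_dec i n) as [->|Hne].
      - rewrite !upd_eq. left; auto.
      - rewrite !upd_neq by auto. right. apply Hf. auto. }
    split.
    + intros H d2. destruct (back _ _ _ _ _ _ d2 HI) as [d1 HI'].
      rewrite <- (IHB q _ _ _ ltac:(lia) HI' (Hf' d1 d2)). apply H.
    + intros H d1. destruct (forth _ _ _ _ _ _ d1 HI) as [d2 HI'].
      rewrite (IHB q _ _ _ ltac:(lia) HI' (Hf' d1 d2)). apply H.
  - destruct q as [|q]; [lia|].
    assert (Hf' : forall d1 d2 i, free_in i B -> In (upd g1 n d1 i, upd g2 n d2 i) ((d1, d2) :: P)).
    { intros d1 d2 i Hi. destruct (Nat.eq_dec i n) as [->|Hne].
      - rewrite !upd_eq. left; auto.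
      - rewrite !upd_neq by auto. right. apply Hf. auto. }
    split.
    + intros [d1 H]. destruct (forth _ _ _ _ _ _ d1 HI) as [d2 HI'].
      exists d2. rewrite <- (IHB q _ _ _ ltac:(lia) HI' (Hf' d1 d2)). apply H.
    + intros [d2 H]. destruct (back _ _ _ _ _ _ d2 HI) as [d1 HI'].
      exists d1. rewrite (IHB q _ _ _ ltac:(lia) HI' (Hf' d1 d2)). apply H.
Qed.

Lemma EF_sentence F1 F2 k1 k2 (K1 : kinded F1 k1) (K2 : kinded F2 k2) A :
  sentence A ->
  (forall K j, j <= qr A -> (atleast (fun x => k1 x = K) j <-> atleast (fun y => k2 y = K) j)) ->
  (fmodels F1 A <-> fmodels F2 A).
Proof.
  intros HA HC.
  assert (HI : Inv F1 F2 k1 k2 (qr A) []).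
  { split; [|split]; simpl; try tauto.
    intros K j Hj. rewrite (atleast_ext _ (fun x => k1 x = K)) by (intros; simpl; tauto).
    rewrite (atleast_ext (fun y => k2 y = K /\ ~ False) (fun y => k2 y = K)) by tauto. auto. }
  assert (Hf : forall g1 g2, forall i, free_in i A -> In (g1 i, g2 i) (@nil (F1 * F2))).
  { intros g1 g2 i Hi. exfalso. apply (HA i Hi). }
  split.
  - intros H g2. destruct (fne F1) as [a].
    rewrite <- (EF_main F1 F2 k1 k2 K1 K2 A (qr A) [] (fun _ => a) g2 (le_n _) HI (Hf _ _)). apply H.
  - intros H g1. destruct (fne F2) as [a].
    rewrite (EF_main F1 F2 k1 k2 K1 K2 A (qr A) [] g1 (fun _ => a) (le_n _) HI (Hf _ _)). apply H.
Qed.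

Lemma NoDup_map_inj {A B} (f : A -> B) (l : list A) :
  (forall x y, f x = f y -> x = y) -> NoDup l -> NoDup (map f l).
Proof.
  intros Hf H; induction H; simpl; constructor; auto.
  intros Hin. apply in_map_iff in Hin. destruct Hin as [y [E Hy]]. apply Hf in E. subst; auto.
Qed.

Section Eucl.
Variable F : frame.
Hypothesis HE : euclidean F.

Definition inC (s x : F) := exists u, fR F s u /\ fR F u x.

Lemma E1 s x y : fR F s x -> fR F s y -> fR F x y.
Proof. intros; eapply HE; eauto. Qed.

Lemma R_inC s x : fR F s x -> inC s x.
Proof. intros H. exists x. split; auto. eapply E1; eauto. Qed.

Lemma inC_refl s x : inC s x -> fR F x x.
Proof. intros [u [H1 H2]]. eapply E1; eauto. Qed.

Lemma inC_rel s x y : inC s x -> inC s y -> fR F x y.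
Proof.
  intros [u [H1 H2]] [v [H3 H4]].
  assert (fR F u v) by (eapply E1; eauto).
  assert (fR F v x) by (apply (HE u v x); auto).
  apply (E1 v); auto.
Qed.

Lemma inC_clos s x y : inC s x -> fR F x y -> inC s y.
Proof.
  intros [u [H1 H2]] H3. exists u. split; auto.
  assert (fR F u u) by (apply (E1 s); auto).
  assert (fR F x u) by (apply (HE u x u); auto).
  apply (E1 x); auto.
Qed.

Lemma reach_cases s t : reach F s t -> t = s \/ inC s t.
Proof.
  intros H. unfold reach in H. apply clos_rt_rt1n in H.
  assert (G : forall x z, clos_refl_trans_1n F (fR F) x z -> x = s \/ inC s x -> z = s \/ inC s z).
  { intros x z Hxz; induction Hxz; intros Hx; auto.
    apply IHHxz. right. destruct Hx as [->|Hx].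
    - apply R_inC; auto.
    - eapply inC_clos; eauto. }
  apply (G s t H). auto.
Qed.

Lemma inC_reach s x : inC s x -> reach F s x.
Proof. intros [u [H1 H2]]. eapply rt_trans; apply rt_step; eauto. Qed.

Lemma refl_inC s : fR F s s -> inC s s.
Proof. intros; apply R_inC; auto. Qed.

Lemma inC_s_refl s : inC s s -> fR F s s.
Proof. apply inC_refl. Qed.

Definition stem (s x : F) := reach F s x /\ ~ fR F s x /\ x <> s.

Lemma stem_inC s x : stem s x -> inC s x.
Proof. intros [H1 [H2 H3]]. destruct (reach_cases _ _ H1); tauto. Qed.

Lemma refl_nostem s x : fR F s s -> ~ stem s x.
Proof.
  intros Hs Hx. pose proof (stem_inC _ _ Hx) as [u [H1 H2]]. destruct Hx as [_ [Hn _]].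
  apply Hn. assert (fR F u s) by (apply (HE s u s); auto). eapply E1; eauto.
Qed.

Lemma twostep_stem s x : ~ fR F s s -> inC s x -> ~ fR F s x -> stem s x.
Proof.
  intros Hs Hx Hn. split; [apply inC_reach; auto|split; auto].
  intros ->. apply Hs. apply inC_refl with s; auto.
Qed.

Lemma reach_succ s y : reach F s y -> (exists u, fR F s u) -> exists u, fR F y u.
Proof.
  intros Hr [u Hu]. destruct (reach_cases _ _ Hr) as [->|Hc]; eauto.
  exists y. eapply inC_refl; eauto.
Qed.

Definition gkind (s : F) (x : gen_subframe F s) : kind :=
  if excluded_middle_informative (fR F s (proj1_sig x)) then KPetal
  else if excluded_middle_informative (proj1_sig x = s) then KRoot else KStem.

Lemma gkind_root s x : gkind s x = KRoot <-> (proj1_sig x = s /\ ~ fR F s s).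
Proof.
  destruct x as [x hx]. unfold gkind; simpl. destruct excluded_middle_informative as [H|H];
  [|destruct excluded_middle_informative as [H'|H']]; split; intros; try discriminate; auto.
  - destruct H0 as [-> H0]; tauto.
  - split; auto. subst. auto.
  - tauto.
Qed.

Lemma gkind_nonroot s x : gkind s x <> KRoot <-> inC s (proj1_sig x).
Proof.
  rewrite gkind_root. destruct x as [x Hx]; simpl.
  split.
  - intros H. destruct (reach_cases _ _ Hx) as [->|Hc]; auto.
    apply refl_inC. apply NNPP. intros Hn. apply H; auto.
  - intros Hc [-> Hn]. apply Hn. apply inC_refl with s; auto.
Qed.

Lemma gkind_petal s x : gkind s x = KPetal <-> fR F s (proj1_sig x).
Proof.
  unfold gkind. destruct excluded_middle_informative as [H|H];
  [|destruct excluded_middle_informative as [H'|H']]; split; intros; try discriminate; tauto.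
Qed.

Lemma gkind_stem s x : gkind s x = KStem <-> stem s (proj1_sig x).
Proof.
  unfold gkind. destruct x as [x Hx]; simpl.
  destruct excluded_middle_informative as [H|H];
  [|destruct excluded_middle_informative as [H'|H']]; split; intros; try discriminate.
  - destruct H0 as [_ [H0 _]]; tauto.
  - destruct H0 as [_ [_ H0]]; tauto.
  - split; auto.
  - split; auto.
Qed.

Lemma gkinded s : kinded (gen_subframe F s) (gkind s).
Proof.
  intros x y. simpl.
  destruct (classic (gkind s x = KRoot)) as [Hx|Hx].
  - rewrite Hx. apply gkind_root in Hx. destruct Hx as [Ex Hn]. rewrite Ex.
    destruct (gkind s y) eqn:Ey; simpl.
    + apply gkind_root in Ey. destruct Ey as [-> _]. tauto.
    + apply gkind_petal in Ey. tauto.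
    + apply gkind_stem in Ey. destruct Ey as [_ [Ey _]]. tauto.
  - assert (Hx' := Hx). apply gkind_nonroot in Hx'.
    assert (relk (gkind s x) (gkind s y) <-> gkind s y <> KRoot).
    { destruct (gkind s x); try congruence; destruct (gkind s y); simpl; split; intros; try congruence; auto. }
    rewrite H, gkind_nonroot. split.
    + intros; eapply inC_clos; eauto.
    + intros; eapply inC_rel; eauto.
Qed.

Lemma lift_list s (P : F -> Prop) (l : list F) : (forall x, In x l -> reach F s x) ->
  exists l' : list (gen_subframe F s), map (@proj1_sig _ _) l' = l.
Proof.
  induction l as [|a l IH]; intros H.
  - exists []; auto.
  - destruct IH as [l' E]. { intros; apply H; simpl; auto. }
    exists (exist _ a (H a (or_introl eq_refl)) :: l'). simpl. f_equal; auto.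
Qed.

Lemma gen_atleast s (P : F -> Prop) j : (forall x, P x -> reach F s x) ->
  (atleast (fun x : gen_subframe F s => P (proj1_sig x)) j <-> atleast P j).
Proof.
  intros HP. split.
  - intros [l [H1 [H2 H3]]]. exists (map (@proj1_sig _ _) l). repeat split.
    + rewrite length_map; auto.
    + apply NoDup_map_inj; auto. intros; apply sig_ext; auto.
    + intros x Hx. apply in_map_iff in Hx. destruct Hx as [y [<- Hy]]. apply H3; auto.
  - intros [l [H1 [H2 H3]]]. destruct (lift_list s P l) as [l' E]. { intros; apply HP, H3; auto. }
    exists l'. subst l. repeat split.
    + rewrite length_map in H1; auto.
    + eapply NoDup_map_inv; eauto.
    + intros x Hx. apply H3. apply in_map; auto.
Qed.

Lemma gcount_petal s j : atleast (fun x => gkind s x = KPetal) j <-> atleast (fR F s) j.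
Proof.
  rewrite (atleast_ext _ (fun x : gen_subframe F s => fR F s (proj1_sig x))) by (intros; apply gkind_petal).
  apply gen_atleast. intros; apply rt_step; auto.
Qed.

Lemma gcount_stem s j : atleast (fun x => gkind s x = KStem) j <-> atleast (stem s) j.
Proof.
  rewrite (atleast_ext _ (fun x : gen_subframe F s => stem s (proj1_sig x))) by (intros; apply gkind_stem).
  apply gen_atleast. intros x [H _]; auto.
Qed.

Lemma atleast_le1 {X} (P : X -> Prop) j : (forall x y, P x -> P y -> x = y) -> atleast P j -> j <= 1.
Proof.
  intros H [l [H1 [H2 H3]]]. subst j. destruct l as [|a [|b l]]; simpl; try lia.
  exfalso. inversion H2; subst. apply H4. left. apply H; apply H3; simpl; auto.
Qed.

Lemma atleast_0 {X} (P : X -> Prop) : atleast P 0.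
Proof. exists []. repeat split; auto. constructor. intros x []. Qed.

Lemma atleast_1 {X} (P : X -> Prop) x : P x -> atleast P 1.
Proof. intros H. exists [x]. repeat split; auto. repeat constructor; simpl; tauto. intros y [<-|[]]; auto. Qed.

Lemma atleast_none {X} (P : X -> Prop) j : (forall x, ~ P x) -> atleast P j -> j = 0.
Proof. intros H [l [H1 [H2 H3]]]. destruct l; simpl in *; auto. exfalso; eapply H, H3; left; eauto. Qed.

Lemma gcount_root s j : atleast (fun x => gkind s x = KRoot) j <-> j <= (if excluded_middle_informative (fR F s s) then 0 else 1).
Proof.
  destruct excluded_middle_informative as [Hs|Hs]; split; intros H.
  - apply atleast_none in H; [lia|]. intros x Hx. apply gkind_root in Hx. tauto.
  - assert (j = 0) by lia. subst; apply atleast_0.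
  - eapply atleast_le1; [|eauto]. intros x y Hx Hy. apply gkind_root in Hx, Hy. apply sig_ext. intuition congruence.
  - destruct j as [|[|]]; try lia. apply atleast_0.
    apply atleast_1 with (exist _ s (rt_refl _ _ s)). apply gkind_root. simpl; auto.
Qed.

End Eucl.

Local Open Scope Z_scope.

Lemma fpt_iff m n k : flower_pt m n k = true <-> (0 <= n /\ 0 <= k <= m + n) \/ (n < 0 /\ 1 <= k <= m).
Proof.
  unfold flower_pt. destruct (0 <=? n) eqn:E.
  - apply Z.leb_le in E. rewrite andb_true_iff, !Z.leb_le. lia.
  - apply Z.leb_gt in E. rewrite andb_true_iff, !Z.leb_le. lia.
Qed.

Definition mkfl m n (Hm : 1 <= m) (Hn : -1 <= n) (z : Z) : flower_carrier m n :=
  match Bool.bool_dec (flower_pt m n z) true with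
  | left H => exist _ z H
  | right _ => exist _ 1 (flower_pt_one Hm Hn)
  end.

Lemma mkfl_val m n Hm Hn z : flower_pt m n z = true -> proj1_sig (mkfl m n Hm Hn z) = z.
Proof. intros H. unfold mkfl. destruct Bool.bool_dec; simpl; congruence. Qed.

Definition fkind m n (x : flower_carrier m n) : kind :=
  let k := proj1_sig x in
  if (k =? 0) then KRoot else if (k <=? m) then KPetal else KStem.

Lemma fkinded m n Hm Hn : kinded (@flower m n Hm Hn) (fkind m n).
Proof.
  intros [x hx] [y hy]. simpl. unfold flower_rel, fkind. simpl.
  apply fpt_iff in hx, hy.
  destruct (x =? 0) eqn:E1; [apply Z.eqb_eq in E1|apply Z.eqb_neq in E1];
  (destruct (x <=? m) eqn:E2; [apply Z.leb_le in E2|apply Z.leb_gt in E2]);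
  (destruct (y =? 0) eqn:E3; [apply Z.eqb_eq in E3|apply Z.eqb_neq in E3]);
  (destruct (y <=? m) eqn:E4; [apply Z.leb_le in E4|apply Z.leb_gt in E4]);
  simpl; split; intros; try tauto; lia.
Qed.

Lemma range_list_spec a c z : In z (map (fun i => a + Z.of_nat i) (seq 0 c)) <-> a <= z < a + Z.of_nat c.
Proof.
  rewrite in_map_iff. split.
  - intros [i [<- Hi]]. apply in_seq in Hi. lia.
  - intros H. exists (Z.to_nat (z - a)). split; [lia|]. apply in_seq. lia.
Qed.

Lemma range_nodup a c : NoDup (map (fun i => a + Z.of_nat i) (seq 0 c)).
Proof. apply NoDup_map_inj; [intros; lia|]. apply seq_NoDup. Qed.

Lemma preimage_list {X} (f : X -> Z) (P : X -> Prop) (zs : list Z) :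
  (forall z, In z zs -> exists x, P x /\ f x = z) ->
  exists l, map f l = zs /\ forall x, In x l -> P x.
Proof.
  induction zs as [|z zs IH]; intros H.
  - exists []; simpl; tauto.
  - destruct IH as [l [E Hl]]. { intros; apply H; simpl; auto. }
    destruct (H z (or_introl eq_refl)) as [x [Px Ex]].
    exists (x :: l). simpl. split; [congruence|]. intros y [<-|Hy]; auto.
Qed.

Lemma count_range {X} (f : X -> Z) (P : X -> Prop) a c j :
  (forall x y, f x = f y -> x = y) ->
  (forall x, P x -> a <= f x < a + Z.of_nat c) ->
  (forall z, a <= z < a + Z.of_nat c -> exists x, P x /\ f x = z) ->
  (atleast P j <-> (j <= c)%nat).
Proof.
  intros Hinj H1 H2. split.
  - intros [l [L1 [L2 L3]]]. subst j.
    assert (HH : Nat.le (length (map f l)) (length (map (fun i => a + Z.of_nat i) (seq 0 c)))).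
    { apply NoDup_incl_length. { apply NoDup_map_inj; auto. }
      intros z Hz. apply in_map_iff in Hz. destruct Hz as [x [<- Hx]]. apply range_list_spec. auto. }
    rewrite !length_map, length_seq in HH. auto.
  - intros Hj. destruct (preimage_list f P (map (fun i => a + Z.of_nat i) (seq 0 j))) as [l [E Hl]].
    { intros z Hz. apply range_list_spec in Hz. apply H2. lia. }
    exists l. split; [|split; auto].
    + rewrite <- (length_map f l), E, length_map, length_seq. auto.
    + apply (NoDup_map_inv f). rewrite E. apply range_nodup.
Qed.

Definition fcnt (m n : Z) (K : kind) : nat :=
  match K with
  | KRoot => if 0 <=? n then 1%nat else 0%nat
  | KPetal => Z.to_nat m
  | KStem => if 0 <=? n then Z.to_nat n else 0%nat
  end.

Lemma fcount m n Hm Hn K j : atleast (fun x : @flower m n Hm Hn => fkind m n x = K) j <-> (j <= fcnt m n K)%nat.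
Proof.
  assert (Hinj : forall x y : flower_carrier m n, proj1_sig x = proj1_sig y -> x = y) by (intros; apply sig_ext; auto).
  assert (Hpre : forall z, flower_pt m n z = true -> exists x : flower_carrier m n, proj1_sig x = z /\ fkind m n x = fkind m n (mkfl m n Hm Hn z)).
  { intros z Hz. exists (mkfl m n Hm Hn z). rewrite mkfl_val; auto. }
  destruct K; simpl.
  - destruct (0 <=? n) eqn:E; [apply Z.leb_le in E|apply Z.leb_gt in E].
    + apply (count_range (@proj1_sig _ _) _ 0 1); auto.
      * intros [x hx] Hx. unfold fkind in Hx; simpl proj1_sig in *.
        destruct (x =? 0) eqn:E1; [apply Z.eqb_eq in E1|]; [lia|]. destruct (x <=? m); discriminate.
      * intros z Hz. exists (mkfl m n Hm Hn z). rewrite mkfl_val by (apply fpt_iff; lia).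
        unfold fkind. rewrite mkfl_val by (apply fpt_iff; lia). replace z with 0 by lia. auto.
    + apply (count_range (@proj1_sig _ _) _ 0 0); auto.
      * intros [x hx] Hx. unfold fkind in Hx; simpl proj1_sig in *. apply fpt_iff in hx.
        destruct (x =? 0) eqn:E1; [apply Z.eqb_eq in E1|]; [lia|]. destruct (x <=? m); discriminate.
      * intros z Hz. exfalso. simpl in Hz. lia.
  - apply (count_range (@proj1_sig _ _) _ 1 (Z.to_nat m)); auto.
    + intros [x hx] Hx. unfold fkind in Hx; simpl proj1_sig in *. apply fpt_iff in hx.
      destruct (x =? 0) eqn:E1; [discriminate|apply Z.eqb_neq in E1].
      destruct (x <=? m) eqn:E2; [apply Z.leb_le in E2|discriminate]. lia.
    + intros z Hz. exists (mkfl m n Hm Hn z). rewrite mkfl_val by (apply fpt_iff; lia).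
      split; auto. unfold fkind. rewrite mkfl_val by (apply fpt_iff; lia).
      destruct (z =? 0) eqn:E1; [apply Z.eqb_eq in E1; lia|].
      destruct (z <=? m) eqn:E2; [auto|apply Z.leb_gt in E2; lia].
  - destruct (0 <=? n) eqn:E; [apply Z.leb_le in E|apply Z.leb_gt in E].
    + apply (count_range (@proj1_sig _ _) _ (m + 1) (Z.to_nat n)); auto.
      * intros [x hx] Hx. unfold fkind in Hx; simpl proj1_sig in *. apply fpt_iff in hx.
        destruct (x =? 0) eqn:E1; [discriminate|apply Z.eqb_neq in E1].
        destruct (x <=? m) eqn:E2; [discriminate|apply Z.leb_gt in E2]. lia.
      * intros z Hz. exists (mkfl m n Hm Hn z). rewrite mkfl_val by (apply fpt_iff; lia).
        split; auto. unfold fkind. rewrite mkfl_val by (apply fpt_iff; lia).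
        destruct (z =? 0) eqn:E1; [apply Z.eqb_eq in E1; lia|].
        destruct (z <=? m) eqn:E2; [apply Z.leb_le in E2; lia|auto].
    + apply (count_range (@proj1_sig _ _) _ 0 0); auto.
      * intros [x hx] Hx. unfold fkind in Hx; simpl proj1_sig in *. apply fpt_iff in hx.
        destruct (x =? 0) eqn:E1; [discriminate|apply Z.eqb_neq in E1].
        destruct (x <=? m) eqn:E2; [discriminate|apply Z.leb_gt in E2]. lia.
      * intros z Hz. exfalso. simpl in Hz. lia.
Qed.

Definition compat (a b : kind) : Prop := a = b \/ (a = KStem /\ b = KPetal).

Lemma bm_compat (F1 F2 : frame) k1 k2 (K1 : kinded F1 k1) (K2 : kinded F2 k2) (f : F1 -> F2) :
  (forall x, compat (k1 x) (k2 (f x))) -> (forall y, exists x, f x = y /\ k1 x = k2 y) -> bm_image F2 F1.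
Proof.
  intros Hc Hs. exists f. split; [split|].
  - intros x y Hxy. rewrite (K1 x y) in Hxy. rewrite (K2 (f x) (f y)).
    destruct (Hc x) as [Ex|[Ex1 Ex2]]; destruct (Hc y) as [Ey|[Ey1 Ey2]];
    rewrite <- ?Ex, <- ?Ey, ?Ex1, ?Ex2, ?Ey1, ?Ey2 in *; auto;
    destruct (k1 x), (k1 y), (k2 (f x)), (k2 (f y)); simpl in *; try discriminate; auto.
  - intros x t Ht. destruct (Hs t) as [x' [E Hk]]. exists x'. split; auto.
    rewrite (K1 x x'). rewrite (K2 (f x) t) in Ht. rewrite Hk.
    destruct (Hc x) as [Ex|[Ex1 Ex2]]; [rewrite Ex; auto|].
    rewrite Ex1. rewrite Ex2 in Ht. destruct (k2 t); simpl in *; auto.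
  - intros y. destruct (Hs y) as [x [E _]]; eauto.
Qed.

Lemma bm_complete (F1 F2 : frame) k1 (K1 : kinded F1 k1) (f : F1 -> F2) :
  (forall a b : F2, fR F2 a b) -> (forall y, exists x, f x = y /\ k1 x = KPetal) -> bm_image F2 F1.
Proof.
  intros Hc Hs. exists f. split; [split|].
  - intros; apply Hc.
  - intros x t Ht. destruct (Hs t) as [x' [E Hk]]. exists x'. split; auto.
    rewrite (K1 x x'), Hk. destruct (k1 x); simpl; auto.
  - intros y. destruct (Hs y) as [x [E _]]; eauto.
Qed.

Lemma flower_bm M Nn k l HM HNn Hk Hl :
  (1 <= k <= M) -> (l = -1 \/ 0 <= l <= Nn) ->
  bm_image (@flower k l Hk Hl) (@flower M Nn HM HNn).
Proof.
  intros Hkm [El|Hl2].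
  - subst l.
    apply (bm_complete (@flower M Nn HM HNn) (@flower k (-1) Hk Hl) (fkind M Nn) (fkinded M Nn HM HNn)
      (fun x : flower_carrier M Nn => mkfl k (-1) Hk Hl (let z := proj1_sig x in if (1 <=? z) && (z <=? M) then Z.min z k else 1))).
    + intros [a ha] [b hb]. unfold fR; simpl. unfold flower_rel; simpl. apply fpt_iff in ha, hb. lia.
    + intros [y hy]. assert (hy' := hy). apply fpt_iff in hy'.
      exists (mkfl M Nn HM HNn y). split.
      * apply sig_ext. simpl. rewrite mkfl_val. 2:{ rewrite mkfl_val by (apply fpt_iff; lia).
          destruct ((1 <=? y) && (y <=? M)) eqn:E; apply fpt_iff; lia. }
        rewrite mkfl_val by (apply fpt_iff; lia).
        replace ((1 <=? y) && (y <=? M)) with true. lia.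
        symmetry; apply andb_true_iff; split; apply Z.leb_le; lia.
      * unfold fkind. rewrite mkfl_val by (apply fpt_iff; lia).
        destruct (y =? 0) eqn:E1; [apply Z.eqb_eq in E1; lia|].
        destruct (y <=? M) eqn:E2; [auto|apply Z.leb_gt in E2; lia].
  - set (g := fun z => if z =? 0 then 0 else if z <=? M then Z.min z k else if l =? 0 then 1 else k + Z.min (z - M) l).
    assert (Hg : forall x : flower_carrier M Nn, flower_pt k l (g (proj1_sig x)) = true).
    { intros [z hz]. simpl. apply fpt_iff in hz. apply fpt_iff. unfold g.
      destruct (z =? 0) eqn:E1; [apply Z.eqb_eq in E1|apply Z.eqb_neq in E1]; [lia|].
      destruct (z <=? M) eqn:E2; [apply Z.leb_le in E2|apply Z.leb_gt in E2]; [lia|].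
      destruct (l =? 0) eqn:E3; [apply Z.eqb_eq in E3|apply Z.eqb_neq in E3]; lia. }
    apply (bm_compat (@flower M Nn HM HNn) (@flower k l Hk Hl) (fkind M Nn) (fkind k l) (fkinded M Nn HM HNn) (fkinded k l Hk Hl)
      (fun x : flower_carrier M Nn => mkfl k l Hk Hl (g (proj1_sig x)))).
    + intros x. unfold fkind. rewrite mkfl_val by auto. destruct x as [z hz]. simpl.
      apply fpt_iff in hz. unfold g, compat.
      destruct (z =? 0) eqn:E1; [apply Z.eqb_eq in E1|apply Z.eqb_neq in E1]; [simpl; auto|].
      destruct (z <=? M) eqn:E2; [apply Z.leb_le in E2|apply Z.leb_gt in E2].
      * replace (Z.min z k =? 0) with false by (symmetry; apply Z.eqb_neq; lia).
        replace (Z.min z k <=? k) with true by (symmetry; apply Z.leb_le; lia). auto.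
      * destruct (l =? 0) eqn:E3; [apply Z.eqb_eq in E3|apply Z.eqb_neq in E3]; simpl.
        -- right. split; auto. replace (1 <=? k) with true by (symmetry; apply Z.leb_le; lia). auto.
        -- left. replace (k + Z.min (z - M) l =? 0) with false by (symmetry; apply Z.eqb_neq; lia).
           replace (k + Z.min (z - M) l <=? k) with false by (symmetry; apply Z.leb_gt; lia). auto.
    + intros [y hy]. assert (hy' := hy). apply fpt_iff in hy'.
      set (z := if y =? 0 then 0 else if y <=? k then y else M + (y - k)).
      assert (Hz : flower_pt M Nn z = true).
      { apply fpt_iff. unfold z. destruct (y =? 0) eqn:E1; [apply Z.eqb_eq in E1|apply Z.eqb_neq in E1]; [lia|].
        destruct (y <=? k) eqn:E2; [apply Z.leb_le in E2|apply Z.leb_gt in E2]; lia. }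
      assert (Hgz : g z = y).
      { unfold g, z. destruct (y =? 0) eqn:E1; [apply Z.eqb_eq in E1|apply Z.eqb_neq in E1].
        - simpl. lia.
        - destruct (y <=? k) eqn:E2; [apply Z.leb_le in E2|apply Z.leb_gt in E2].
          + replace (y =? 0) with false by (symmetry; apply Z.eqb_neq; lia).
            replace (y <=? M) with true by (symmetry; apply Z.leb_le; lia). lia.
          + replace (M + (y - k) =? 0) with false by (symmetry; apply Z.eqb_neq; lia).
            replace (M + (y - k) <=? M) with false by (symmetry; apply Z.leb_gt; lia).
            destruct (l =? 0) eqn:E3; [apply Z.eqb_eq in E3|apply Z.eqb_neq in E3]; lia. }
      exists (mkfl M Nn HM HNn z). split.
      * apply sig_ext. simpl. rewrite mkfl_val by auto. rewrite mkfl_val by auto. auto.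
      * unfold fkind. rewrite mkfl_val by auto. simpl. unfold z.
        destruct (y =? 0) eqn:E1; [apply Z.eqb_eq in E1|apply Z.eqb_neq in E1]; [subst; simpl; auto|].
        destruct (y <=? k) eqn:E2; [apply Z.leb_le in E2|apply Z.leb_gt in E2].
        -- replace (y =? 0) with false by (symmetry; apply Z.eqb_neq; lia).
           replace (y <=? M) with true by (symmetry; apply Z.leb_le; lia). auto.
        -- replace (M + (y - k) =? 0) with false by (symmetry; apply Z.eqb_neq; lia).
           replace (M + (y - k) <=? M) with false by (symmetry; apply Z.leb_gt; lia). auto.
Qed.

Definition dot : frame := @Frame unit (fun _ _ => False) (inhabits tt).
Definition dkind (x : dot) : kind := KRoot.
Lemma dkinded : kinded dot dkind.
Proof. intros x y; simpl; tauto. Qed.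
Lemma dcount K j : atleast (fun x : dot => dkind x = K) j <-> (j <= match K with KRoot => 1 | _ => 0 end)%nat.
Proof.
  destruct K; simpl; split; intros H.
  - eapply atleast_le1; [|eauto]. intros [] []; auto.
  - destruct j as [|[|]]; try lia. apply atleast_0. apply (atleast_1 _ tt); auto.
  - apply atleast_none in H; [lia|]. discriminate.
  - assert (j = 0%nat) by lia; subst; apply atleast_0.
  - apply atleast_none in H; [lia|]. discriminate.
  - assert (j = 0%nat) by lia; subst; apply atleast_0.
Qed.

Close Scope Z_scope.

Fixpoint trunc (P : nat -> Prop) (N : nat) : nat :=
  match N with
  | 0 => 0
  | S N' => if excluded_middle_informative (P (S N')) then S N' else trunc P N'
  end.

Lemma trunc_spec (P : nat -> Prop) N : P 0 -> (forall j k, k <= j -> P j -> P k) ->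
  P (trunc P N) /\ trunc P N <= N /\ forall j, j <= N -> P j -> j <= trunc P N.
Proof.
  intros H0 Hd. induction N as [|N IH]; simpl.
  - split; [auto|split; [lia|intros; lia]].
  - destruct excluded_middle_informative as [H|H].
    + split; [auto|split; [lia|auto]].
    + destruct IH as [A [B C]]. split; auto. split; [lia|].
      intros j Hj Pj. destruct (Nat.eq_dec j (S N)) as [->|Hne]; [tauto|]. apply C; auto; lia.
Qed.

Fixpoint idx {X : Type} (x : X) (l : list X) : nat :=
  match l with
  | [] => 0
  | a :: l' => if excluded_middle_informative (x = a) then 1
               else let k := idx x l' in if k =? 0 then 0 else S k
  end.

Lemma idx_bound {X} (x : X) l : idx x l <= length l.
Proof.
  induction l as [|a l IH]; simpl; auto.
  destruct excluded_middle_informative; [lia|]. destruct (idx x l =? 0); lia.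
Qed.

Lemma idx_nth {X} (l : list X) d i : NoDup l -> i < length l -> idx (nth i l d) l = S i.
Proof.
  revert i; induction l as [|a l IH]; intros i Hnd Hi; simpl in *; [lia|].
  inversion Hnd; subst.
  destruct i as [|i].
  - destruct excluded_middle_informative; congruence.
  - destruct excluded_middle_informative as [E|E].
    + exfalso. apply H1. rewrite <- E. apply nth_In. lia.
    + rewrite IH by (auto; lia). simpl. auto.
Qed.

Definition idxv {X} (x : X) l : nat := let i := idx x l in if i =? 0 then 1 else i.

Lemma idxv_bound {X} (x : X) l : 1 <= idxv x l <= Nat.max 1 (length l).
Proof. unfold idxv. pose proof (idx_bound x l). destruct (idx x l =? 0) eqn:E; [|apply Nat.eqb_neq in E]; lia. Qed.

Lemma atleast_len {X} (P : X -> Prop) j : atleast P j -> exists l, length l = j /\ NoDup l /\ forall x, In x l -> P x.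
Proof. auto. Qed.

Open Scope Z_scope.

Lemma gen_bm (H : frame) (HE : euclidean H) (t : H) (mP nS : nat) (lP lS : list H) (n : Z)
  (Hm : 1 <= Z.of_nat mP) (Hn : -1 <= n) :
  length lP = mP -> NoDup lP -> (forall x, In x lP -> fR H t x) ->
  length lS = nS -> NoDup lS -> (forall x, In x lS -> stem H t x) ->
  (forall x, stem H t x -> (1 <= nS)%nat) ->
  (fR H t t -> n = -1) -> (~ fR H t t -> n = Z.of_nat nS) ->
  bm_image (@flower (Z.of_nat mP) n Hm Hn) (gen_subframe H t).
Proof.
  intros LP NP IP LS NS IS Hst Hn1 Hn2.
  set (m := Z.of_nat mP) in *.
  set (val := fun x : gen_subframe H t => match gkind H t x with
         | KRoot => 0 | KPetal => Z.of_nat (idxv (proj1_sig x) lP)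
         | KStem => m + Z.of_nat (idxv (proj1_sig x) lS) end).
  assert (Hval : forall x, flower_pt m n (val x) = true /\ fkind m n (mkfl m n Hm Hn (val x)) = gkind H t x).
  { intros x. unfold val. destruct (gkind H t x) eqn:Ek.
    - apply gkind_root in Ek. destruct Ek as [_ Ek].
      assert (n = Z.of_nat nS) by auto.
      assert (Hv : flower_pt m n 0 = true) by (apply fpt_iff; lia).
      split; auto. unfold fkind. rewrite mkfl_val by auto. auto.
    - pose proof (idxv_bound (proj1_sig x) lP).
      assert (Hv : flower_pt m n (Z.of_nat (idxv (proj1_sig x) lP)) = true) by (apply fpt_iff; lia).
      split; auto. unfold fkind. rewrite mkfl_val by auto.
      destruct (_ =? 0) eqn:E1; [apply Z.eqb_eq in E1; lia|].
      destruct (_ <=? m) eqn:E2; [auto|apply Z.leb_gt in E2; lia].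
    - apply gkind_stem in Ek.
      assert (Htt : ~ fR H t t) by (intros Htt; eapply refl_nostem; eauto).
      assert (n = Z.of_nat nS) by auto. pose proof (Hst _ Ek).
      pose proof (idxv_bound (proj1_sig x) lS).
      assert (Hv : flower_pt m n (m + Z.of_nat (idxv (proj1_sig x) lS)) = true) by (apply fpt_iff; lia).
      split; auto. unfold fkind. rewrite mkfl_val by auto.
      destruct (_ =? 0) eqn:E1; [apply Z.eqb_eq in E1; lia|].
      destruct (_ <=? m) eqn:E2; [apply Z.leb_le in E2; lia|auto]. }
  apply (bm_compat (gen_subframe H t) (@flower m n Hm Hn) (gkind H t) (fkind m n)
           (gkinded H HE t) (fkinded m n Hm Hn) (fun x => mkfl m n Hm Hn (val x))).
  - intros x. left. symmetry. apply Hval.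
  - intros [z hz]. assert (hz' := hz). apply fpt_iff in hz'.
    destruct (Z.eq_dec z 0) as [Ez|Ez].
    + subst z. assert (Htt : ~ fR H t t) by (intros Htt; specialize (Hn1 Htt); lia).
      set (x := exist (fun w => clos_refl_trans H (fR H) t w) t (rt_refl _ _ t) : gen_subframe H t).
      assert (Kx : gkind H t x = KRoot) by (apply gkind_root; simpl; auto).
      exists x. split.
      * apply sig_ext. simpl. rewrite mkfl_val by apply Hval. unfold val. rewrite Kx. auto.
      * rewrite Kx. unfold fkind. simpl. auto.
    + destruct (Z_le_gt_dec z m) as [Ezm|Ezm].
      * set (i := (Z.to_nat z - 1)%nat).
        assert (Hi : (i < length lP)%nat) by (unfold i; lia).
        set (w := nth i lP t).
        assert (Hw : fR H t w) by (apply IP; apply nth_In; auto).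
        set (x := exist (fun w => clos_refl_trans H (fR H) t w) w (rt_step _ _ _ _ Hw) : gen_subframe H t).
        assert (Kx : gkind H t x = KPetal) by (apply gkind_petal; simpl; auto).
        exists x. split.
        -- apply sig_ext. simpl. rewrite mkfl_val by apply Hval. unfold val. rewrite Kx.
           simpl. unfold idxv, w. rewrite idx_nth by auto. simpl. unfold i. lia.
        -- rewrite Kx. unfold fkind. simpl.
           destruct (z =? 0) eqn:E1; [apply Z.eqb_eq in E1; lia|].
           destruct (z <=? m) eqn:E2; [auto|apply Z.leb_gt in E2; lia].
      * assert (Hn0 : 0 <= n) by lia.
        assert (Htt : ~ fR H t t) by (intros Htt; specialize (Hn1 Htt); lia).
        specialize (Hn2 Htt).
        set (i := (Z.to_nat (z - m) - 1)%nat).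
        assert (Hi : (i < length lS)%nat) by (unfold i; lia).
        set (w := nth i lS t).
        assert (Hw : stem H t w) by (apply IS; apply nth_In; auto).
        set (x := exist (fun w => clos_refl_trans H (fR H) t w) w (proj1 Hw) : gen_subframe H t).
        assert (Kx : gkind H t x = KStem) by (apply gkind_stem; simpl; auto).
        exists x. split.
        -- apply sig_ext. simpl. rewrite mkfl_val by apply Hval. unfold val. rewrite Kx.
           simpl. unfold idxv, w. rewrite idx_nth by auto. simpl. unfold i. lia.
        -- rewrite Kx. unfold fkind. simpl.
           destruct (z =? 0) eqn:E1; [apply Z.eqb_eq in E1; lia|].
           destruct (z <=? m) eqn:E2; [apply Z.leb_le in E2; lia|auto].
Qed.

Lemma TRUNC (L : mform -> Prop) (A : foform) (HA : sentence A) (H : frame) (HE : euclidean H) (t : H)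
  (Hsucc : exists u, fR H t u) (N : nat) (HN1 : (1 <= N)%nat) (HNq : (qr A <= N)%nat) :
  exists m n (Hm : 1 <= m) (Hn : -1 <= n),
    m <= Z.of_nat N /\ n <= Z.of_nat N /\
    (fR H t t <-> n = -1) /\
    atleast (fR H t) (Z.to_nat m) /\ (forall j, (j <= N)%nat -> atleast (fR H t) j -> (j <= Z.to_nat m)%nat) /\
    (0 <= n -> atleast (stem H t) (Z.to_nat n)) /\
    (forall j, (j <= N)%nat -> atleast (stem H t) j -> (j <= Z.to_nat n)%nat) /\
    (fmodels (gen_subframe H t) A <-> fmodels (@flower m n Hm Hn) A) /\
    (validates (gen_subframe H t) L -> validates (@flower m n Hm Hn) L).
Proof.
  set (mP := trunc (atleast (fR H t)) N).
  set (nS := trunc (atleast (stem H t)) N).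
  destruct (trunc_spec (atleast (fR H t)) N (atleast_0 _) (fun j k Hk Hj => atleast_down _ j k Hk Hj)) as [PA [PB PC]].
  destruct (trunc_spec (atleast (stem H t)) N (atleast_0 _) (fun j k Hk Hj => atleast_down _ j k Hk Hj)) as [SA [SB SC]].
  fold mP in PA, PB, PC. fold nS in SA, SB, SC.
  assert (HmP : (1 <= mP)%nat). { destruct Hsucc as [u Hu]. apply PC; auto. apply (atleast_1 _ u Hu). }
  set (m := Z.of_nat mP).
  assert (Hm : 1 <= m) by (unfold m; lia).
  destruct (classic (fR H t t)) as [Htt|Htt].
  -
    set (n := -1).
    assert (Hn : -1 <= n) by (unfold n; lia).
    assert (Hnostem : forall j, atleast (stem H t) j -> j = 0%nat).
    { intros j Hj. eapply atleast_none; [|eauto]. intros x. apply refl_nostem; auto. }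
    exists m, n, Hm, Hn.
    assert (Hcnt : forall K j, (j <= qr A)%nat -> atleast (fun x => gkind H t x = K) j <-> atleast (fun y : @flower m n Hm Hn => fkind m n y = K) j).
    { intros K j Hj. rewrite fcount. destruct K.
      - rewrite gcount_root. unfold fcnt. destruct excluded_middle_informative; [|tauto]. simpl. lia.
      - rewrite gcount_petal. unfold fcnt, m. rewrite Nat2Z.id. split; [apply PC; lia|].
        intros Hj'. apply (atleast_down _ mP); auto.
      - rewrite gcount_stem. unfold fcnt; simpl. split; [intros X; apply Hnostem in X; lia|].
        intros Hj'. assert (j = 0%nat) by lia. subst. apply atleast_0. }
    split; [unfold m; lia|]. split; [unfold n; lia|]. split; [unfold n; tauto|].
    split; [unfold m; rewrite Nat2Z.id; auto|].
    split; [unfold m; rewrite Nat2Z.id; auto|].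
    split; [unfold n; lia|].
    split; [intros j _ Hj; apply Hnostem in Hj; lia|].
    split.
    + apply (EF_sentence _ _ _ _ (gkinded H HE t) (fkinded m n Hm Hn) A HA Hcnt).
    + intros HV. destruct PA as [lP [LP [NP IP]]].
      assert (Hb : bm_image (@flower m n Hm Hn) (gen_subframe H t)).
      { apply (gen_bm H HE t mP 0 lP [] n Hm Hn); auto.
        - constructor.
        - intros x [].
        - intros x Hx. exfalso. eapply refl_nostem; eauto.
        - tauto. }
      eapply bm_validates; eauto.
  - set (n := Z.of_nat nS).
    assert (Hn : -1 <= n) by (unfold n; lia).
    exists m, n, Hm, Hn.
    assert (Hcnt : forall K j, (j <= qr A)%nat -> atleast (fun x => gkind H t x = K) j <-> atleast (fun y : @flower m n Hm Hn => fkind m n y = K) j).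
    { intros K j Hj. rewrite fcount. destruct K.
      - rewrite gcount_root. unfold fcnt. destruct excluded_middle_informative; [tauto|].
        replace (0 <=? n) with true by (symmetry; apply Z.leb_le; unfold n; lia). lia.
      - rewrite gcount_petal. unfold fcnt, m. rewrite Nat2Z.id. split; [apply PC; lia|].
        intros Hj'. apply (atleast_down _ mP); auto.
      - rewrite gcount_stem. unfold fcnt.
        replace (0 <=? n) with true by (symmetry; apply Z.leb_le; unfold n; lia).
        unfold n. rewrite Nat2Z.id. split; [apply SC; lia|].
        intros Hj'. apply (atleast_down _ nS); auto. }
    split; [unfold m; lia|]. split; [unfold n; lia|]. split; [unfold n; split; [tauto|lia]|].
    split; [unfold m; rewrite Nat2Z.id; auto|].
    split; [unfold m; rewrite Nat2Z.id; auto|].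
    split; [unfold n; rewrite Nat2Z.id; auto|].
    split; [unfold n; rewrite Nat2Z.id; auto|].
    split.
    + apply (EF_sentence _ _ _ _ (gkinded H HE t) (fkinded m n Hm Hn) A HA Hcnt).
    + intros HV. destruct PA as [lP [LP [NP IP]]]. destruct SA as [lS [LS [NS IS]]].
      assert (Hb : bm_image (@flower m n Hm Hn) (gen_subframe H t)).
      { apply (gen_bm H HE t mP nS lP lS n Hm Hn); auto.
        - intros x Hx. apply SC; [lia|]. apply (atleast_1 _ x Hx).
        - tauto. }
      eapply bm_validates; eauto.
Qed.

Close Scope Z_scope.

Definition MAnd (a b : mform) := MNeg (MOr (MNeg a) (MNeg b)).
Definition MTop := MNeg MBot.
Definition bigAnd (l : list mform) := fold_right MAnd MTop l.

Lemma sat_and F V w a b : msat F V w (MAnd a b) <-> msat F V w a /\ msat F V w b.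
Proof. simpl. split; [intros H; split; apply NNPP; tauto | tauto]. Qed.

Lemma sat_bigAnd F V w l : msat F V w (bigAnd l) <-> forall a, In a l -> msat F V w a.
Proof.
  induction l as [|a l IH]; simpl bigAnd.
  - simpl. split; [intros _ a []|tauto].
  - rewrite sat_and, IH. simpl. split.
    + intros [H1 H2] b [<-|Hb]; auto.
    + intros H; split; auto.
Qed.

Lemma sat_dia F V w a : msat F V w (MDia a) <-> exists v, fR F w v /\ msat F V v a.
Proof.
  simpl. split.
  - intros H. apply NNPP. intros Hn. apply H. intros v Hv Ha. apply Hn. eauto.
  - intros [v [Hv Ha]] H. apply (H v Hv Ha).
Qed.

Definition dP (b i : nat) : mform :=
  MAnd (MVar (b + i)) (bigAnd (map (fun j => MNeg (MVar (b + j))) (seq 0 i))).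

Lemma sat_dP F V x b i : msat F V x (dP b i) <-> V (b + i) x /\ forall j, j < i -> ~ V (b + j) x.
Proof.
  unfold dP. rewrite sat_and, sat_bigAnd. simpl. split.
  - intros [H1 H2]. split; auto. intros j Hj. apply (H2 (MNeg (MVar (b + j)))).
    apply in_map_iff; exists j; split; [reflexivity|apply in_seq; lia].
  - intros [H1 H2]. split; auto. intros a Ha. apply in_map_iff in Ha. destruct Ha as [j [<- Hj]].
    apply in_seq in Hj. simpl. apply H2. lia.
Qed.

Definition Phi1 (b k : nat) := bigAnd (map (fun i => MDia (dP b i)) (seq 0 k)).
Definition Psi (b l : nat) :=
  bigAnd (map (fun i => MAnd (MDia (MDia (dP b i))) (MBox (MNeg (MVar (b + i))))) (seq 0 l)).

Lemma sat_Phi1 F V t b k : msat F V t (Phi1 b k) <->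
  forall i, i < k -> exists x, fR F t x /\ V (b + i) x /\ forall j, j < i -> ~ V (b + j) x.
Proof.
  unfold Phi1. rewrite sat_bigAnd. split.
  - intros H i Hi. specialize (H (MDia (dP b i))). rewrite sat_dia in H.
    destruct H as [x [Hx Hd]]. { apply in_map_iff; exists i; split; [reflexivity|apply in_seq; lia]. }
    exists x. rewrite sat_dP in Hd. tauto.
  - intros H a Ha. apply in_map_iff in Ha. destruct Ha as [i [<- Hi]]. apply in_seq in Hi.
    rewrite sat_dia. destruct (H i ltac:(lia)) as [x Hx]. exists x. rewrite sat_dP. tauto.
Qed.

Lemma sat_Psi F V t b l : msat F V t (Psi b l) <->
  forall i, i < l -> (exists x, (exists u, fR F t u /\ fR F u x) /\ V (b + i) x /\ forall j, j < i -> ~ V (b + j) x)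
     /\ (forall v, fR F t v -> ~ V (b + i) v).
Proof.
  unfold Psi. rewrite sat_bigAnd. split.
  - intros H i Hi. specialize (H (MAnd (MDia (MDia (dP b i))) (MBox (MNeg (MVar (b + i)))))).
    rewrite sat_and, sat_dia in H. destruct H as [[u [Hu Hd]] Hb]. { apply in_map_iff; exists i; split; [reflexivity|apply in_seq; lia]. }
    rewrite sat_dia in Hd. destruct Hd as [x [Hx Hd]]. rewrite sat_dP in Hd.
    split; [exists x; split; [eauto|tauto]|]. simpl in Hb. auto.
  - intros H a Ha. apply in_map_iff in Ha. destruct Ha as [i [<- Hi]]. apply in_seq in Hi.
    destruct (H i ltac:(lia)) as [[x [[u [Hu Hx]] Hd]] Hb].
    rewrite sat_and, sat_dia. split.
    + exists u. split; auto. rewrite sat_dia. exists x. split; auto. rewrite sat_dP. tauto.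
    + simpl. auto.
Qed.

Lemma build {X} (Q : X -> Prop) (W : nat -> X -> Prop) k :
  (forall i, i < k -> exists x, Q x /\ W i x /\ forall j, j < i -> ~ W j x) ->
  atleast Q k.
Proof.
  intros H.
  assert (G : exists l, length l = k /\ NoDup l /\ forall x, In x l -> Q x /\ exists i, i < k /\ W i x).
  { induction k as [|k IH].
    - exists []. split; [reflexivity|split; [constructor|intros x []]].
    - destruct IH as [l [L1 [L2 L3]]]. { intros i Hi; apply H; lia. }
      destruct (H k ltac:(lia)) as [x [Qx [Wx Nx]]].
      exists (l ++ [x]). split; [rewrite length_app; simpl; lia|split].
      + apply NoDup_app; [auto| repeat constructor; simpl; tauto | ].
        intros a Ha Hin. destruct Hin as [Ea|[]]. subst a. destruct (L3 x Ha) as [_ [i [Hi Wi]]]. apply (Nx i Hi Wi).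
      + intros y Hy. apply in_app_or in Hy. destruct Hy as [Hy|[<-|[]]].
        * destruct (L3 y Hy) as [Qy [i [Hi Wi]]]. split; auto. exists i; split; auto.
        * split; auto. exists k; split; auto. }
  destruct G as [l [L1 [L2 L3]]]. exists l. repeat split; auto. intros x Hx; apply L3; auto.
Qed.

Definition dc (k : nat) := MNeg (Phi1 0 k).
Definition df (k l : nat) :=
  MNeg (MAnd (MAnd (MVar (k + l)) (MBox (MNeg (MVar (k + l))))) (MAnd (Phi1 0 k) (Psi k l))).
Definition ddot := MDia MTop.

Lemma ddot_sat F V t : msat F V t ddot <-> exists u, fR F t u.
Proof. unfold ddot. rewrite sat_dia. simpl. split; intros [u H]; exists u; tauto. Qed.

Lemma dc_fail F V t k : ~ msat F V t (dc k) -> atleast (fR F t) k.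
Proof.
  intros H. unfold dc in H. simpl in H. apply NNPP in H. rewrite sat_Phi1 in H.
  apply (build _ (fun i x => V (0 + i) x)). intros i Hi. destruct (H i Hi) as [x Hx]. exists x. tauto.
Qed.

Lemma df_fail F V t k l : ~ msat F V t (df k l) ->
  ~ fR F t t /\ atleast (fR F t) k /\ atleast (fun x => (exists u, fR F t u /\ fR F u x) /\ ~ fR F t x) l.
Proof.
  intros H. unfold df in H. apply NNPP in H.
  rewrite !sat_and in H. destruct H as [[Hr Hb] [HP HS]]. simpl in Hr, Hb.
  split; [|split].
  - intros Htt. exact (Hb t Htt Hr).
  - rewrite sat_Phi1 in HP. apply (build _ (fun i x => V (0 + i) x)). intros i Hi.
    destruct (HP i Hi) as [x Hx]. exists x. tauto.
  - rewrite sat_Psi in HS. apply (build _ (fun i x => V (k + i) x)). intros i Hi.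
    destruct (HS i Hi) as [[x [Hx1 [Hx2 Hx3]]] Hx4]. exists x. split; [split; auto|split; auto].
    intros Htx. exact (Hx4 x Htx Hx2).
Qed.

Lemma dc_refute (F : frame) (t : F) k (lP : list F) : length lP = k -> NoDup lP -> (forall x, In x lP -> fR F t x) ->
  exists V, ~ msat F V t (dc k).
Proof.
  intros L1 L2 L3. exists (fun v x => x = nth v lP t). unfold dc. simpl. intros H. apply H.
  rewrite sat_Phi1. intros i Hi. exists (nth i lP t). split; [apply L3, nth_In; lia|split; auto].
  intros j Hj E. rewrite NoDup_nth in L2. specialize (L2 j i ltac:(lia) ltac:(lia)). simpl in E.
  symmetry in E. specialize (L2 E). lia.
Qed.

Lemma df_refute (F : frame) (t : F) k l (lP lS : list F) : ~ fR F t t ->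
  length lP = k -> NoDup lP -> (forall x, In x lP -> fR F t x) ->
  length lS = l -> NoDup lS -> (forall x, In x lS -> (exists u, fR F t u /\ fR F u x) /\ ~ fR F t x) ->
  exists V, ~ msat F V t (df k l).
Proof.
  intros Htt L1 L2 L3 S1 S2 S3.
  exists (fun v x => if v <? k then x = nth v lP t else if v <? k + l then x = nth (v - k) lS t else x = t).
  unfold df. intros H. apply H. clear H.
  rewrite !sat_and. split; [split|split].
  - simpl. replace (k + l <? k) with false by (symmetry; apply Nat.ltb_ge; lia).
    replace (k + l <? k + l) with false by (symmetry; apply Nat.ltb_ge; lia). auto.
  - simpl. intros v Hv. replace (k + l <? k) with false by (symmetry; apply Nat.ltb_ge; lia).
    replace (k + l <? k + l) with false by (symmetry; apply Nat.ltb_ge; lia). intros ->. auto.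
  - rewrite sat_Phi1. intros i Hi. exists (nth i lP t). split; [apply L3, nth_In; lia|].
    simpl. replace (i <? k) with true by (symmetry; apply Nat.ltb_lt; lia). split; auto.
    intros j Hj. replace (j <? k) with true by (symmetry; apply Nat.ltb_lt; lia). intros E.
    rewrite NoDup_nth in L2. specialize (L2 j i ltac:(lia) ltac:(lia)). symmetry in E. specialize (L2 E). lia.
  - rewrite sat_Psi. intros i Hi. split.
    + exists (nth i lS t). split; [apply S3, nth_In; lia|].
      replace (k + i <? k) with false by (symmetry; apply Nat.ltb_ge; lia).
      replace (k + i <? k + l) with true by (symmetry; apply Nat.ltb_lt; lia).
      replace (k + i - k) with i by lia. split; auto.
      intros j Hj. replace (k + j <? k) with false by (symmetry; apply Nat.ltb_ge; lia).
      replace (k + j <? k + l) with true by (symmetry; apply Nat.ltb_lt; lia).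
      replace (k + j - k) with j by lia. intros E.
      rewrite NoDup_nth in S2. specialize (S2 j i ltac:(lia) ltac:(lia)). symmetry in E. specialize (S2 E). lia.
    + intros v Hv. replace (k + i <? k) with false by (symmetry; apply Nat.ltb_ge; lia).
      replace (k + i <? k + l) with true by (symmetry; apply Nat.ltb_lt; lia).
      replace (k + i - k) with i by lia. intros ->.
      assert (Hin : In (nth i lS t) lS) by (apply nth_In; lia). apply (proj2 (S3 _ Hin)). auto.
Qed.

Lemma atleast_mono {X} (P Q : X -> Prop) j : (forall x, P x -> Q x) -> atleast P j -> atleast Q j.
Proof. intros H [l [A [B C]]]. exists l. repeat split; auto. Qed.

Lemma atleast_some {X} (P : X -> Prop) j : (1 <= j)%nat -> atleast P j -> exists x, P x.
Proof. intros Hj [l [A [B C]]]. destruct l as [|x l]; simpl in A; [lia|]. exists x; apply C; simpl; auto. Qed.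

Lemma G_dot_kind (F : frame) (HE : euclidean F) (s : F) : ~ (exists u, fR F s u) ->
  forall x : gen_subframe F s, gkind F s x = KRoot.
Proof.
  intros Hn x. apply gkind_root. destruct x as [x hx]; simpl.
  destruct (reach_cases F HE s x hx) as [->|[u [Hu _]]]; [|exfalso; eauto].
  split; auto. intros H; eauto.
Qed.

Lemma G_dot_equiv (F : frame) (HE : euclidean F) (s : F) A : sentence A -> ~ (exists u, fR F s u) ->
  (fmodels (gen_subframe F s) A <-> fmodels dot A).
Proof.
  intros HA Hn. apply (EF_sentence _ _ _ _ (gkinded F HE s) dkinded A HA).
  intros K j Hj. rewrite dcount. destruct K.
  - rewrite gcount_root. destruct excluded_middle_informative as [H|H]; [exfalso; eauto|]. tauto.
  - rewrite gcount_petal. split; intros H.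
    + apply atleast_none in H; [lia|]. intros x Hx; eauto.
    + assert (j = 0%nat) by lia; subst; apply atleast_0.
  - rewrite gcount_stem. split; intros H.
    + apply atleast_none in H; [lia|]. intros x Hx. apply (stem_inC F HE) in Hx. destruct Hx as [u [Hu _]]; eauto.
    + assert (j = 0%nat) by lia; subst; apply atleast_0.
Qed.

Lemma G_dot_bm (F : frame) (HE : euclidean F) (s : F) : ~ (exists u, fR F s u) ->
  bm_image dot (gen_subframe F s).
Proof.
  intros Hn. apply (bm_compat _ _ _ _ (gkinded F HE s) dkinded (fun _ => tt)).
  - intros x. left. rewrite G_dot_kind; auto.
  - intros []. exists (exist _ s (rt_refl _ _ s)). split; auto. rewrite G_dot_kind; auto.
Qed.

Definition shapes (N : nat) : list (Z * Z) :=
  list_prod (map Z.of_nat (seq 1 N)) (map (fun i => (Z.of_nat i - 1)%Z) (seq 0 (N + 2))).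

Definition bad (L : mform -> Prop) (A : foform) (kl : Z * Z) : Prop :=
  exists Hk Hl, validates (@flower (fst kl) (snd kl) Hk Hl) L /\ ~ fmodels (@flower (fst kl) (snd kl) Hk Hl) A.

Definition delta (kl : Z * Z) : mform :=
  if (snd kl <? 0)%Z then dc (Z.to_nat (fst kl)) else df (Z.to_nat (fst kl)) (Z.to_nat (snd kl)).

Definition badd (L : mform -> Prop) (A : foform) : Prop := validates dot L /\ ~ fmodels dot A.

Definition thephi (L : mform -> Prop) (A : foform) : mform :=
  MAnd (if excluded_middle_informative (badd L A) then ddot else MTop)
       (bigAnd (map (fun kl => if excluded_middle_informative (bad L A kl) then delta kl else MTop) (shapes (S (qr A))))).

Lemma thephi_valid L A (G : frame) : mvalid G (thephi L A) <->
  (badd L A -> mvalid G ddot) /\ (forall kl, In kl (shapes (S (qr A))) -> bad L A kl -> mvalid G (delta kl)).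
Proof.
  unfold thephi. split.
  - intros H. split.
    + intros Hb V w. specialize (H V w). rewrite sat_and in H. destruct H as [H _].
      destruct excluded_middle_informative; tauto.
    + intros kl Hin Hb V w. specialize (H V w). rewrite sat_and, sat_bigAnd in H. destruct H as [_ H].
      specialize (H (if excluded_middle_informative (bad L A kl) then delta kl else MTop)).
      destruct excluded_middle_informative; [|tauto]. apply H.
      apply in_map_iff. exists kl. split; auto. destruct excluded_middle_informative; tauto.
  - intros [H1 H2] V w. rewrite sat_and, sat_bigAnd. split.
    + destruct excluded_middle_informative; [apply H1; auto|simpl; auto].
    + intros a Ha. apply in_map_iff in Ha. destruct Ha as [kl [<- Hin]].
      destruct excluded_middle_informative; [apply H2; auto|simpl; auto].
Qed.

Lemma in_shapes N (m n : Z) : (1 <= m <= Z.of_nat N)%Z -> (-1 <= n <= Z.of_nat N)%Z -> In (m, n) (shapes N).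
Proof.
  intros Hm Hn. unfold shapes. apply in_prod_iff. split.
  - apply in_map_iff. exists (Z.to_nat m). split; [lia|]. apply in_seq. lia.
  - apply in_map_iff. exists (Z.to_nat (n + 1)). split; [lia|]. apply in_seq. lia.
Qed.

Lemma shapes_in N (kl : Z * Z) : In kl (shapes N) ->
  exists k' l', fst kl = Z.of_nat k' /\ snd kl = (Z.of_nat l' - 1)%Z /\ (1 <= k' <= N)%nat /\ (l' < N + 2)%nat.
Proof.
  destruct kl as [k l]. unfold shapes. rewrite in_prod_iff. intros [H1 H2].
  apply in_map_iff in H1, H2. destruct H1 as [k' [<- Hk]]. destruct H2 as [l' [<- Hl]].
  apply in_seq in Hk, Hl. exists k', l'. simpl. repeat split; auto; lia.
Qed.

Section Main.
Variables (L : mform -> Prop) (HL : euclidean_logic L) (A : foform) (HA : sentence A).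
Hypothesis Hi : forall F : frame, euclidean F -> validates F L ->
      (fmodels F A <-> forall s : F, fmodels (@gen_subframe F s) A).
Hypothesis Hii : forall (m n m' n' : Z) (Hm : (1 <= m)%Z) (Hn : (-1 <= n)%Z)
           (Hm' : (1 <= m')%Z) (Hn' : (-1 <= n')%Z),
      validates (flower Hm Hn) L ->
      fmodels (flower Hm Hn) A ->
      bm_image (flower Hm' Hn') (flower Hm Hn) ->
      fmodels (flower Hm' Hn') A.

Lemma rooted (F : frame) (HF : validates F L) (s : F) :
  mvalid (gen_subframe F s) (thephi L A) <-> fmodels (gen_subframe F s) A.
Proof.
  assert (HE : euclidean F) by (eapply euclid_of_L; eauto).
  set (G := gen_subframe F s).
  assert (HGL : validates G L) by (apply gen_validates; auto).
  assert (HGE : euclidean G) by (eapply euclid_of_L; eauto).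
  set (N := S (qr A)).
  assert (HN1 : (1 <= N)%nat) by (unfold N; lia).
  assert (HNq : (qr A <= N)%nat) by (unfold N; lia).
  rewrite (thephi_valid L A G). split.
  - intros [Hd Hs].
    destruct (classic (exists u, fR F s u)) as [Hsu|Hsu].
    + destruct (TRUNC L A HA F HE s Hsu N HN1 HNq) as [m [n [Hm [Hn [T1 [T2 [T3 [T4 [T5 [T6 [T7 [T8 T9]]]]]]]]]]]].
      fold G in T8, T9. rewrite T8. apply NNPP. intros Hnot.
      assert (Hbad : bad L A (m, n)) by (exists Hm, Hn; simpl; auto).
      specialize (Hs (m, n) (in_shapes N m n ltac:(lia) ltac:(lia)) Hbad).
      unfold G in Hs. rewrite gen_mvalid in Hs.
      set (x0 := exist (fun w => clos_refl_trans F (fR F) s w) s (rt_refl _ _ s) : G).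
      unfold delta in Hs. simpl in Hs.
      destruct (n <? 0)%Z eqn:En.
      * destruct T4 as [lP [L1 [L2 L3]]].
        destruct (dc_refute F s _ lP L1 L2 L3) as [V HV]. apply HV. exact (Hs V x0).
      * apply Z.ltb_ge in En.
        assert (Hss : ~ fR F s s) by (intros Hss; apply T3 in Hss; lia).
        destruct T4 as [lP [L1 [L2 L3]]].
        destruct (T6 En) as [lS [S1 [S2 S3]]].
        destruct (df_refute F s _ _ lP lS Hss L1 L2 L3 S1 S2) as [V HV].
        { intros x Hx. specialize (S3 x Hx). split; [apply (stem_inC F HE); auto|]. apply S3. }
        apply HV. exact (Hs V x0).
    + unfold G. rewrite (G_dot_equiv F HE s A HA Hsu). apply NNPP. intros Hnot.
      assert (Hb : badd L A).
      { split; auto. eapply bm_validates; [apply (G_dot_bm F HE s Hsu)|]. auto. }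
      specialize (Hd Hb (fun _ _ => False) (exist _ s (rt_refl _ _ s))).
      rewrite ddot_sat in Hd. destruct Hd as [[u hu] Hu]. simpl in Hu. eauto.
  - intros HGA.
    assert (Hsub : forall x : G, fmodels (gen_subframe G x) A) by (apply (Hi G HGE HGL); auto).
    split.
    + intros [Hdv Hdn] V x. rewrite ddot_sat.
      destruct (classic (exists u, fR F s u)) as [Hsu|Hsu].
      * destruct x as [x hx]. destruct (reach_succ F HE s x hx Hsu) as [u Hu].
        exists (exist _ u (rt_trans _ _ _ _ _ hx (rt_step _ _ _ _ Hu))). simpl. auto.
      * exfalso. apply Hdn. rewrite <- (G_dot_equiv F HE s A HA Hsu). auto.
    + intros kl Hin Hbad V x. apply NNPP. intros Hf.
      destruct Hbad as [Hk [Hl [HbV HbA]]]. apply HbA.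
      destruct (shapes_in _ _ Hin) as [k' [l' [Ek [El [Hk' Hl']]]]].
      unfold delta in Hf.
      destruct (snd kl <? 0)%Z eqn:En.
      * apply dc_fail in Hf.
        assert (Hx : exists u, fR G x u) by (apply (atleast_some _ (Z.to_nat (fst kl))); auto; lia).
        destruct (TRUNC L A HA G HGE x Hx N HN1 HNq) as [m [n [Hm [Hn [T1 [T2 [T3 [T4 [T5 [T6 [T7 [T8 T9]]]]]]]]]]]].
        specialize (T5 (Z.to_nat (fst kl)) ltac:(lia) Hf).
        apply (Hii m n (fst kl) (snd kl) Hm Hn Hk Hl).
        -- apply T9. apply gen_validates; auto.
        -- apply T8. apply Hsub.
        -- apply flower_bm; lia.
      * apply Z.ltb_ge in En.
        apply df_fail in Hf. destruct Hf as [Hxx [HP HS]].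
        assert (Hx : exists u, fR G x u) by (apply (atleast_some _ (Z.to_nat (fst kl))); auto; lia).
        destruct (TRUNC L A HA G HGE x Hx N HN1 HNq) as [m [n [Hm [Hn [T1 [T2 [T3 [T4 [T5 [T6 [T7 [T8 T9]]]]]]]]]]]].
        specialize (T5 (Z.to_nat (fst kl)) ltac:(lia) HP).
        assert (HS' : atleast (stem G x) (Z.to_nat (snd kl))).
        { eapply atleast_mono; [|exact HS]. intros y [Hy1 Hy2]. apply (twostep_stem G HGE); auto. }
        specialize (T7 (Z.to_nat (snd kl)) ltac:(lia) HS').
        assert (n <> (-1)%Z) by (intros E; apply Hxx, T3; auto).
        apply (Hii m n (fst kl) (snd kl) Hm Hn Hk Hl).
        -- apply T9. apply gen_validates; auto.
        -- apply T8. apply Hsub.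
        -- apply flower_bm; lia.
Qed.

End Main.

Theorem proposition4 (L : mform -> Prop) (HL : euclidean_logic L) (A : foform)
  (HA : sentence A) :
  modally_definable (Fr L) A <->
  ((forall F : frame, euclidean F -> validates F L ->
      (fmodels F A <-> forall s : F, fmodels (@gen_subframe F s) A)) /\
   (forall (m n m' n' : Z) (Hm : (1 <= m)%Z) (Hn : (-1 <= n)%Z)
           (Hm' : (1 <= m')%Z) (Hn' : (-1 <= n')%Z),
      validates (flower Hm Hn) L ->
      fmodels (flower Hm Hn) A ->
      bm_image (flower Hm' Hn') (flower Hm Hn) ->
      fmodels (flower Hm' Hn') A)).
Proof.
  split.
  - intros [phi Hphi]. split.
    + intros F HE HF. rewrite <- (Hphi F HF). rewrite mvalid_gen.
      split; intros H s; specialize (H s); apply (Hphi _ (gen_validates F s L HF)); auto.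
    + intros m n m' n' Hm Hn Hm' Hn' HV HA' Hb.
      apply (Hphi _ (bm_validates _ _ L Hb HV)). apply (bm_mvalid _ _ phi Hb). apply (Hphi _ HV). auto.
  - intros [Hi Hii]. exists (thephi L A). intros F HF. rewrite mvalid_gen.
    rewrite (Hi F (euclid_of_L L F HL HF) HF).
    split; intros H s; apply (rooted L HL A HA Hi Hii F HF s); auto.
Qed.
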